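(* Let $(X,\mathrm{dist})$ be a metric space, let $d\in\mathbb{N}$ and $\eta>0$. Suppose $\{f_i\}_{i\in I}$ is a partition of unity for $X$ such that (1) for any subset $F\subseteq I$ of cardinality greater than $d+1$, $\prod_{i\in F}f_i=0$; and (2) each $f_i$ is Lipschitz with constant $\eta$. Then for any $r\in\big[0,\frac{1}{\eta(d+1)}\big)$ there is a partition of unity $\{g_i\}_{i\in I}$ for $X$ such that (3) for any $i\in I$, $N_r(\mathrm{supp}(g_i))\subseteq\mathrm{supp}(f_i)^{o}$; and (4) each $g_i$ is Lipschitz with constant $\dfrac{(d+2)\eta}{(1-(d+1)\eta r)^2}$.
   Context: A partition of unity for $X$ is a family of continuous functions $f_i\colon X\to[0,\infty)$ whose supports are contained in a locally finite family of open sets and with $\sum_i f_i(x)=1$ for all $x\in X$. $\mathrm{supp}$ is the closed support, $S^{o}$ the interior of $S$, and $N_r(S)=\{x\in X:\mathrm{dist}(x,S)<r\}$. *)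

(* Defs.v *)
From HB Require Import structures.
From mathcomp Require Import all_boot all_order all_algebra.
From mathcomp Require Import reals.
From Stdlib Require List.
Set Implicit Arguments. Unset Strict Implicit. Unset Printing Implicit Defensive.
Import Order.TTheory GRing.Theory Num.Theory.
Local Open Scope ring_scope.

Section MetricDefs.
Variables (R : realType) (X : Type) (dist : X -> X -> R).

Definition is_metric : Prop :=
  [/\ (forall x y, 0 <= dist x y),
      (forall x y, dist x y = 0 <-> x = y),
      (forall x y, dist x y = dist y x) &
      (forall x y z, dist x z <= dist x y + dist y z)].

Definition mopen (U : X -> Prop) : Prop :=
  forall x, U x -> exists2 e : R, 0 < e & forall y, dist x y < e -> U y.

Definition mclosure (A : X -> Prop) : X -> Prop :=
  fun x => forall e : R, 0 < e -> exists y, A y /\ dist x y < e.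

Definition minterior (S : X -> Prop) : X -> Prop :=
  fun x => exists2 e : R, 0 < e & forall y, dist x y < e -> S y.

Definition supp (f : X -> R) : X -> Prop := mclosure (fun x => f x <> 0).

(* N_r(S) = {x : dist(x,S) < r}; dist(x,S) = inf_{y in S} dist x y < r
   iff some y in S has dist x y < r *)
Definition Nbhd (r : R) (S : X -> Prop) : X -> Prop :=
  fun x => exists y, S y /\ dist x y < r.

Definition mcontinuous (f : X -> R) : Prop :=
  forall x (e : R), 0 < e -> exists2 del : R, 0 < del &
    forall y, dist x y < del -> `|f x - f y| < e.

Definition lipschitz (L : R) (f : X -> R) : Prop :=
  forall x y, `|f x - f y| <= L * dist x y.

Definition locally_finite (Idx : Type) (U : Idx -> X -> Prop) : Prop :=
  forall x, exists2 e : R, 0 < e & exists s : seq Idx,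
    forall i, (exists y, dist x y < e /\ U i y) -> List.In i s.

(* partition of unity: nonnegative continuous functions whose supports are
   contained in a locally finite family of open sets, summing to 1 at every
   point (the sum at x is the finite sum over the indices with f_i x <> 0) *)
Definition partition_of_unity (Idx : Type) (f : Idx -> X -> R) : Prop :=
  [/\ (forall i x, 0 <= f i x),
      (forall i, mcontinuous (f i)),
      (exists U : Idx -> X -> Prop,
         [/\ (forall i, mopen (U i)),
             (forall i x, supp (f i) x -> U i x) &
             locally_finite U]) &
      (forall x, exists s : seq Idx,
         [/\ List.NoDup s, (forall i, f i x <> 0 -> List.In i s) &
             \sum_(i <- s) f i x = 1])].

End MetricDefs.

(* Main.v *)
Require Import Defs.
From mathcomp Require Import all_boot all_order all_algebra.
From mathcomp Require Import reals.
From Stdlib Require List.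
From Stdlib Require Import ClassicalEpsilon.
From mathcomp Require Import ring lra.
Import Order.TTheory GRing.Theory Num.Theory.
Set Implicit Arguments. Unset Strict Implicit.
Local Open Scope ring_scope.

Lemma maxr0_lip (R:realDomainType) (a b:R) : `|Num.max a 0 - Num.max b 0| <= `|a - b|.
Proof.
have [ha|ha] := lerP a 0; have [hb|hb] := lerP b 0;
rewrite ?(max_r ha) ?(max_l (ltW ha)) ?(max_r hb) ?(max_l (ltW hb)) ?subrr ?normr0 //.
all: rewrite ler_norml; apply/andP; split.
all: try (rewrite ler_normr; apply/orP; (left; lra) || (right; lra)).
all: rewrite lerNl ler_normr; apply/orP; (left; lra) || (right; lra).
Qed.

Lemma sum_le_cover (R : numDomainType) (I : Type) (u : I -> R) (s t : seq I) :
  (forall i, 0 <= u i) -> List.NoDup s ->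
  (forall i, List.In i s -> u i != 0 -> List.In i t) ->
  \sum_(i <- s) u i <= \sum_(i <- t) u i.
Proof.
move=> u0; elim: s t => [|a s IH] t ns ht.
  by rewrite big_nil; apply: sumr_ge0 => i _; exact: u0.
move/List.NoDup_cons_iff: ns => [nas ns].
rewrite big_cons.
case: (eqVneq (u a) 0) => [ua|ua].
  rewrite ua add0r; apply: IH => // i si; apply: ht; by right.
have [t1 [t2 et]] := List.in_split _ _ (ht a (or_introl erefl) ua); subst t.
rewrite big_cat big_cons /= addrCA lerD2l -big_cat; apply: IH => // i si ui.
have := ht i (or_intror si) ui; rewrite !List.in_app_iff /=.
case=> [|[ai|]]; auto. by subst.
Qed.

Lemma sum_le_filter (R : numDomainType) (I : Type) (p : pred I) (w : I -> R) (B : R) s :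
  (forall i, p i -> w i <= B) -> (forall i, ~~ p i -> w i <= 0) ->
  \sum_(i <- s) w i <= B * (size (filter p s))%:R.
Proof.
move=> hp hn; elim: s => [|a s IH]; first by rewrite big_nil mulr0.
rewrite big_cons /=; case: (boolP (p a)) => pa /=.
  rewrite -addn1 natrD mulrDr mulr1 [X in _ <= X]addrC; apply: lerD => //; exact: hp.
rewrite -[X in _ <= X]add0r; apply: lerD => //; exact: hn.
Qed.

Lemma in_filter_In (I : Type) (p : pred I) s i : List.In i (filter p s) -> List.In i s.
Proof.
elim: s => [|a s IH] //=; case: (p a) => /=; last by auto.
by case=> [->|/IH]; auto.
Qed.

Lemma nodup_filter (I : Type) (p : pred I) s : List.NoDup s -> List.NoDup (filter p s).
Proof.
elim: s => [|a s IH] //= /List.NoDup_cons_iff [nas ns]; case: (p a); last exact: IH.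
apply/List.NoDup_cons_iff; split; last exact: IH.
move=> H; apply: nas; exact: (@in_filter_In _ p s a H).
Qed.

Lemma count_bound (R : realType) (X Idx : Type) (f : Idx -> X -> R) (d : nat) x s :
  (forall (F : seq Idx) (x : X), List.NoDup F -> (d.+1 < size F)%N ->
      \prod_(i <- F) f i x = 0) -> List.NoDup s ->
  (size (filter (fun j => f j x != 0%R) s) <= d.+1)%N.
Proof.
move=> H ns; rewrite leqNgt; apply/negP => hs.
have := H _ x (nodup_filter (fun j => f j x != 0%R) ns) hs; apply/eqP.
rewrite big_filter prodf_seq_neq0.
by elim: (s) => //= a t ->; rewrite implybb.
Qed.

Lemma lip_cont (R : realType) (X : Type) (dist : X -> X -> R) (L : R) g :
  0 < L -> lipschitz dist L g -> mcontinuous dist g.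
Proof.
move=> L0 hg x e e0; exists (e / L); first exact: divr_gt0.
move=> y hy; apply: (le_lt_trans (hg x y)).
by rewrite mulrC -ltr_pdivlMr.
Qed.

Theorem lemma4p5 (R : realType) (X : Type) (dist : X -> X -> R)
  (Idx : Type) (f : Idx -> X -> R) (d : nat) (eta : R) :
  is_metric dist ->
  0 < eta ->
  partition_of_unity dist f ->
  (forall (F : seq Idx) (x : X), List.NoDup F -> (d.+1 < size F)%N ->
      \prod_(i <- F) f i x = 0) ->
  (forall i, lipschitz dist eta (f i)) ->
  forall r : R, 0 <= r -> r < 1 / (eta * d.+1%:R) ->
  exists g : Idx -> X -> R,
    [/\ partition_of_unity dist g,
        (forall i x, Nbhd dist r (supp dist (g i)) x ->
                     minterior dist (supp dist (f i)) x) &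
        (forall i, lipschitz dist
            ((d.+2)%:R * eta / (1 - d.+1%:R * eta * r) ^+ 2) (g i))].
Proof.
move=> [dpos dzero dsym dtri] eta0 [f0 fcont [U [Uopen Usupp Ulf]] fsum] hprod flip r r0 rlt.
set c := eta * r.
have c0 : 0 <= c by rewrite mulr_ge0 // ltW.
set a := d.+1%:R * eta * r.
have n0 : 0 < d.+1%:R :> R by rewrite ltr0n.
have a0 : 0 <= a by rewrite mulr_ge0 // mulr_ge0 // ltW.
have a1 : a < 1.
  rewrite ltr_pdivlMr ?mulr_gt0 // in rlt.
  have -> : a = r * (eta * d.+1%:R) by rewrite /a; ring.
  by [].
have ac : a = c * d.+1%:R by rewrite /a /c; ring.
pose hh := fun i x => Num.max (f i x - c) 0.
have hh0 : forall i x, 0 <= hh i x by move=> i x; rewrite /hh le_max lexx orbT.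
have hhge : forall i x, f i x - c <= hh i x by move=> i x; rewrite /hh le_max lexx.
have hhf : forall i x, hh i x != 0 -> c < f i x.
  move=> i x; rewrite /hh /=; case: (lerP (f i x - c) 0) => h.
    by rewrite ?eqxx.
  by rewrite -subr_gt0.
have hhf' : forall i x, hh i x != 0 -> f i x != 0.
  by move=> i x /hhf h; rewrite gt_eqF // (le_lt_trans c0 h).
have hhlip : forall i x y, `|hh i x - hh i y| <= eta * dist x y.
  move=> i x y; apply: le_trans (maxr0_lip _ _) _.
  have -> : (f i x - c) - (f i y - c) = f i x - f i y by ring.
  exact: flip.
pose sx := fun x => proj1_sig (constructive_indefinite_description _ (fsum x)).
have hsx : forall x, [/\ List.NoDup (sx x), (forall i, f i x <> 0 -> List.In i (sx x))
     & \sum_(i <- sx x) f i x = 1]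
  := fun x => proj2_sig (constructive_indefinite_description _ (fsum x)).
pose D := fun x => \sum_(j <- sx x) hh j x.
have Dlb : forall x, 1 - a <= D x.
  move=> x; case: (hsx x) => ns cov s1.
  have h : \sum_(j <- sx x) (f j x - hh j x) <= c * (size [seq j <- sx x | f j x != 0])%:R.
    apply: sum_le_filter.
    - by move=> i _; have := hhge i x; lra.
    - move=> i /negPn/eqP ->; have := hh0 i x; lra.
  rewrite sumrB s1 -/(D x) in h.
  have hc := @count_bound R X Idx f d x (sx x) hprod ns.
  have : c * (size [seq j <- sx x | f j x != 0])%:R <= a.
    by rewrite ac ler_wpM2l // ler_nat.
  lra.
have Dpos : forall x, 0 < D x by move=> x; have := Dlb x; lra.
have Dlip : forall x y, D x - D y <= d.+1%:R * eta * dist x y.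
  move=> x y; case: (hsx x) => nsx covx _; case: (hsx y) => nsy covy _.
  have h1 : \sum_(j <- sx x) hh j y <= D y.
    apply: (@sum_le_cover R Idx (fun j => hh j y)) => // i _ hi.
    by apply: covy; apply/eqP; apply: hhf'.
  have h2 : \sum_(j <- sx x) (hh j x - hh j y)
      <= (eta * dist x y) * (size [seq j <- sx x | f j x != 0])%:R.
    apply: sum_le_filter.
    - by move=> i _; apply: le_trans (ler_norm _) (hhlip i x y).
    - move=> i /negPn/eqP fi.
      have -> : hh i x = 0 by apply/eqP; apply: contraT => /hhf'; rewrite fi eqxx.
      by have := hh0 i y; lra.
  rewrite sumrB -/(D x) in h2.
  have hc := @count_bound R X Idx f d x (sx x) hprod nsx.
  have : eta * dist x y * (size [seq j <- sx x | f j x != 0])%:R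
      <= d.+1%:R * eta * dist x y.
    have -> : d.+1%:R * eta * dist x y = eta * dist x y * d.+1%:R by ring.
    by rewrite ler_wpM2l ?ler_nat // mulr_ge0 // ltW.
  lra.
have hhD : forall i y, hh i y <= D y.
  move=> i y; case: (eqVneq (hh i y) 0) => [->|hi]; first exact: ltW.
  case: (hsx y) => _ covy _.
  have := @sum_le_cover R Idx (fun j => hh j y) [:: i] (sx y) (hh0^~ y).
  rewrite big_seq1; apply.
  - by apply: List.NoDup_cons => //; exact: List.NoDup_nil.
  - move=> j [<-|//] hj; apply: covy; apply/eqP; exact: hhf'.
pose g := fun i x => hh i x / D x.
have gnz : forall i x, g i x != 0 -> hh i x != 0.
  move=> i x; rewrite /g; case: (eqVneq (hh i x) 0) => [->|//].
  by rewrite mul0r eqxx.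
set K := (d.+2)%:R * eta / (1 - a) ^+ 2.
have K0 : 0 < K.
  have b0 : 0 < 1 - a by lra.
  by rewrite /K divr_gt0 // ?mulr_gt0 ?ltr0n ?exprn_gt0.
have glip : forall i, lipschitz dist K (g i).
  move=> i x y.
  have Dx := Dpos x; have Dy := Dpos y.
  have b0 : 0 < 1 - a by lra.
  set t := hh i y / D y.
  have t0 : 0 <= t by rewrite divr_ge0 // ltW.
  have t1 : t <= 1 by rewrite ler_pdivrMr // mul1r.
  have e : g i x - g i y = (hh i x - hh i y + t * (D y - D x)) / D x.
    rewrite /g /t; field.
    by apply/andP; split; apply: lt0r_neq0.
  have hD : `|D y - D x| <= d.+1%:R * eta * dist x y.
    rewrite ler_norml; have h1 := Dlip x y; have h2 := Dlip y x.
    rewrite (dsym y x) in h2; apply/andP; split.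
    - by rewrite lerNl opprB.
    - exact: h2.
  have hN : `|hh i x - hh i y + t * (D y - D x)| <= d.+2%:R * eta * dist x y.
    apply: le_trans (ler_normD _ _) _; rewrite normrM (ger0_norm t0).
    have h1 := hhlip i x y.
    have h2 : t * `|D y - D x| <= `|D y - D x| by rewrite ler_piMl.
    have -> : d.+2%:R * eta * dist x y = eta * dist x y + d.+1%:R * eta * dist x y.
      by rewrite -[d.+2]addn1 natrD; ring.
    lra.
  have hK : d.+2%:R * eta <= K * D x.
    apply: (@le_trans _ _ (K * (1 - a))); last by rewrite ler_wpM2l ?(ltW K0) ?Dlb.
    rewrite /K.
    have -> : d.+2%:R * eta / (1 - a) ^+ 2 * (1 - a) = d.+2%:R * eta / (1 - a).
      by field; apply: lt0r_neq0.
    rewrite ler_pdivlMr // ler_piMr //; last lra.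
    by rewrite mulr_ge0 // ltW.
  rewrite e normrM normfV (gtr0_norm Dx) ler_pdivrMr //.
  apply: le_trans hN _; rewrite [X in _ <= X]mulrAC ler_wpM2r //.
exists g; split.
- split.
  + by move=> i x; rewrite /g divr_ge0 // ltW.
  + move=> i; exact: lip_cont K0 (glip i).
  + exists U; split => // i x hx; apply: Usupp => e e0.
    have [y [hy dy]] := hx e e0; exists y; split => //.
    by apply/eqP; apply: hhf'; apply: gnz; apply/eqP.
  + move=> x; case: (hsx x) => ns cov _; exists (sx x); split => //.
    * by move=> i /eqP /gnz /hhf' /eqP; exact: cov.
    * by rewrite /g -mulr_suml -/(D x) divff // lt0r_neq0.
- move=> i x [y [hy dxy]].
  have dl : 0 < (r - dist x y) / 2 by rewrite divr_gt0 //; lra.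
  have [w [hw dw]] := hy _ dl.
  have fw : c < f i w by apply: hhf; apply: gnz; apply/eqP.
  exists ((r - dist x y) / 2) => // z dz.
  move=> e e0; exists z; split; last by rewrite (proj2 (dzero z z) erefl).
  have t1 := dtri z x w; have t2 := dtri x y w; have t3 := dsym z x.
  have dzw : dist z w < r by lra.
  have h3 : eta * dist z w < c by rewrite /c ltr_pM2l.
  have := flip i z w; rewrite ler_norml => /andP [h1 _].
  apply/eqP; rewrite gt_eqF //; lra.
- exact: glip.
Qed.
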